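(* For each $k\ge 1$ there is a monic polynomial $P_k$ of degree $k$ (with rational coefficients) such that for all $n\ge 2$ the number of $k$-chains of $(\mathsf{Tr}(n),\preccurlyeq)$ equals $$\sum_{i=0}^{k}\mathfrak{z}_i(n,k)=(k+1)^{\,n-(k+1)}\,P_k(n).$$
   Context: A triword of size $n$ is a word $u=u_1\cdots u_n$ with $u_i\in\{0,1,2\}$, $u_1\ne 2$, and such that $u_i=0$ implies $u_j\neq 1$ for all $j>i$; $\mathsf{Tr}(n)$ is their set, ordered componentwise ($u\preccurlyeq v$ iff $u_i\le v_i$ for all $i$). A $k$-chain of $\mathsf{Tr}(n)$ is a sequence $[u^{(1)},\dots,u^{(k)}]$ of triwords of size $n$ with $u^{(1)}\preccurlyeq\cdots\preccurlyeq u^{(k)}$ (repetitions allowed). For $i\in[0,k]$, $\mathfrak{z}_i(n,k)$ is the number of $k$-chains in which exactly the last $i$ words $u^{(k-i+1)},\dots,u^{(k)}$ do not contain the letter $0$ (and the first $k-i$ do). *)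

(* Defs.v *)
From HB Require Import structures.
From mathcomp Require Import all_boot all_order all_algebra.
Set Implicit Arguments. Unset Strict Implicit. Unset Printing Implicit Defensive.
Import Order.TTheory GRing.Theory Num.Theory.

(* Words of size n over the alphabet {0,1,2}; position i (0-based) is u_{i+1}. *)
Definition word (n : nat) := {ffun 'I_n -> 'I_3}.

Definition triword n (u : word n) : bool :=
  [forall i : 'I_n, (val i == 0%N) ==> (val (u i) != 2%N)] &&
  [forall i : 'I_n, forall j : 'I_n,
      ((i < j)%N && (val (u i) == 0%N)) ==> (val (u j) != 1%N)].

Definition word_le n (u v : word n) : bool :=
  [forall i : 'I_n, (val (u i) <= val (v i))%N].

Definition has0 n (u : word n) : bool := [exists i : 'I_n, val (u i) == 0%N].

(* A k-chain [u^(1),...,u^(k)] is c : 'I_k -> word n (c j = u^(j+1)),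
   all triwords, weakly increasing (consecutive comparisons suffice by
   transitivity; we require all pairs i <= j to be literal). *)
Definition is_chain n k (c : {ffun 'I_k -> word n}) : bool :=
  [forall j : 'I_k, triword (c j)] &&
  [forall i : 'I_k, forall j : 'I_k, (i <= j)%N ==> word_le (c i) (c j)].

Definition nchains (n k : nat) : nat :=
  #|[pred c : {ffun 'I_k -> word n} | is_chain c]|.

Definition zeta (n k i : nat) : nat :=
  #|[pred c : {ffun 'I_k -> word n} |
      is_chain c && [forall j : 'I_k, has0 (c j) == (val j < k - i)%N]]|.

(* Main.v *)
Require Import Defs.
From HB Require Import structures.
From mathcomp Require Import all_boot all_order all_algebra.
From mathcomp Require Import zify ring.
Set Implicit Arguments. Unset Strict Implicit. Unset Printing Implicit Defensive.
Import Order.TTheory GRing.Theory Num.Theory.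

Definition col k := {ffun 'I_k -> 'I_3}.
Definition mono k (a : col k) : bool :=
  [forall i : 'I_k, forall j : 'I_k, (i <= j)%N ==> (val (a i) <= val (a j))%N].
Definition good k m (Z : {set 'I_k}) (t : {ffun 'I_m -> col k}) : bool :=
  [forall p, mono (t p)] &&
  [forall p : 'I_m, forall j : 'I_k,
     ((j \in Z) || [exists q : 'I_m, (q < p)%N && (val (t q j) == 0%N)])
       ==> (val (t p j) != 1%N)].
Definition zeros k (a : col k) : {set 'I_k} := [set j | val (a j) == 0%N].
Definition ok1 k (Z : {set 'I_k}) (a : col k) :=
  mono a && [forall j, (j \in Z) ==> (val (a j) != 1%N)].
Definition GG k m (Z : {set 'I_k}) := #|[pred t : {ffun 'I_m -> col k} | good Z t]|.

Definition consf T m (x : T * {ffun 'I_m -> T}) : {ffun 'I_m.+1 -> T} :=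
  [ffun p => if unlift ord0 p is Some p' then x.2 p' else x.1].
Definition unconsf T m (f : {ffun 'I_m.+1 -> T}) : T * {ffun 'I_m -> T} :=
  (f ord0, [ffun p => f (lift ord0 p)]).

Lemma consf0 T m x : @consf T m x ord0 = x.1.
Proof. by rewrite ffunE unlift_none. Qed.
Lemma consfS T m x p : @consf T m x (lift ord0 p) = x.2 p.
Proof. by rewrite ffunE liftK. Qed.

Lemma consf_bij (T : finType) m : bijective (@consf T m).
Proof.
exists (@unconsf T m).
  by case=> a t; rewrite /unconsf consf0 /=; congr pair; apply/ffunP=> p; rewrite ffunE consfS.
move=> f; apply/ffunP=> p; rewrite ffunE.
by case: (unliftP ord0 p) => [p'|] -> //=; rewrite ffunE.
Qed.

Lemma good_cons k (m : nat) Z (a : col k) (t : {ffun 'I_m -> col k}) :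
  good Z (consf (a, t)) = ok1 Z a && good (Z :|: zeros a) t.
Proof.
apply/idP/idP.
- case/andP=> /forallP H1 /forallP H2.
  apply/andP; split; first (apply/andP; split).
  + by have := H1 ord0; rewrite consf0.
  + apply/forallP=> j; apply/implyP=> jZ.
    have /forallP/(_ j) := H2 ord0; rewrite consf0 jZ; exact.
  apply/andP; split.
  + apply/forallP=> p; have := H1 (lift ord0 p); by rewrite consfS.
  + apply/forallP=> p; apply/forallP=> j; apply/implyP=> Hj.
    have /forallP/(_ j)/implyP := H2 (lift ord0 p); rewrite consfS /=; apply.
    case/orP: Hj => [|/existsP[q /andP[qp qj]]].
      rewrite in_setU inE => /orP[->//|aj]; apply/orP; right.
      by apply/existsP; exists ord0; rewrite consf0 aj andbT /bump /=.
    apply/orP; right; apply/existsP; exists (lift ord0 q); rewrite consfS qj andbT.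
    by rewrite /= /bump /=.
- case/andP=> /andP[ma /forallP Ha] /andP[/forallP H1 /forallP H2].
  apply/andP; split.
  + apply/forallP=> p; case: (unliftP ord0 p) => [p'|] ->.
      by rewrite consfS.
    by rewrite consf0.
  + apply/forallP=> p; apply/forallP=> j; apply/implyP.
    case: (unliftP ord0 p) => [p'|] ->.
    * rewrite consfS => Hj; have /forallP/(_ j)/implyP := H2 p'; apply.
      case/orP: Hj => [jZ|/existsP[q /andP[qp qj]]].
        by rewrite in_setU jZ.
      move: qp qj; case: (unliftP ord0 q) => [q'|] ->.
        rewrite consfS /= /bump /= => qp qj; apply/orP; right.
        by apply/existsP; exists q'; rewrite qj andbT.
      by rewrite consf0 => _ qj; rewrite in_setU inE qj orbT.
    * rewrite consf0 => /orP[jZ|/existsP[q /andP[qp _]]].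
        by have /implyP := Ha j; apply.
      by [].
Qed.

Lemma card_cons k m (Q : pred (col k)) Z :
  #|[pred f : {ffun 'I_m.+1 -> col k} | Q (f ord0) && good Z f]|
  = \sum_(a : col k | Q a && ok1 Z a) GG m (Z :|: zeros a).
Proof.
rewrite -sum1_card (reindex (@consf (col k) m)) /=; last exact/onW_bij/consf_bij.
rewrite -(pair_big_dep xpredT (fun a t => Q (consf (a, t) ord0) && good Z (consf (a, t))) (fun _ _ => 1%N)) /=.
rewrite (bigID (fun a => Q a && ok1 Z a)) /= [X in (_ + X)%N]big1 ?addn0.
  apply: eq_bigr => a Ha; rewrite /GG -sum1_card; apply: eq_bigl => t.
  rewrite [good Z _]good_cons consf0 /= inE. case/andP: Ha => -> ->. by [].
move=> a Ha; apply: big1 => t; rewrite consf0 good_cons.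
by case: (Q a) Ha => //= /negbTE ->.
Qed.
Definition trf k n (c : {ffun 'I_k -> {ffun 'I_n -> 'I_3}}) : {ffun 'I_n -> col k} :=
  [ffun p => [ffun j => c j p]].
Definition trb k n (t : {ffun 'I_n -> col k}) : {ffun 'I_k -> {ffun 'I_n -> 'I_3}} :=
  [ffun j => [ffun p => t p j]].
Lemma trb_bij k n : bijective (@trb k n).
Proof.
exists (@trf k n) => x; apply/ffunP => i; apply/ffunP => j; by rewrite !ffunE.
Qed.

Definition no2 k (a : col k) := [forall j, val (a j) != 2%N].

Lemma chain_good k m (t : {ffun 'I_m.+1 -> col k}) :
  is_chain (trb t : {ffun 'I_k -> word m.+1}) = no2 (t ord0) && good set0 t.
Proof.
rewrite /is_chain /good /triword /word_le /no2.
apply/idP/idP.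
- case/andP=> /forallP Ht /forallP Hl; apply/and3P; split.
  + apply/forallP=> j; case/andP: (Ht j) => /forallP/(_ ord0)/implyP/(_ isT).
    by rewrite !ffunE.
  + apply/forallP=> p; apply/forallP=> i; apply/forallP=> j; apply/implyP=> ij.
    by have /forallP/(_ p) := (implyP (forallP (Hl i) j) ij); rewrite !ffunE.
  + apply/forallP=> p; apply/forallP=> j; apply/implyP.
    rewrite inE /= => /existsP[q /andP[qp qj]].
    case/andP: (Ht j) => _ /forallP/(_ q)/forallP/(_ p)/implyP; rewrite !ffunE; apply.
    by rewrite qp qj.
- case/and3P=> /forallP H2 /forallP Hm /forallP Hg; apply/andP; split.
  + apply/forallP=> j; apply/andP; split.
    * apply/forallP=> i; apply/implyP=> i0.
      have -> : i = ord0 by apply: val_inj; apply/eqP.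
      by rewrite !ffunE.
    * apply/forallP=> q; apply/forallP=> p; apply/implyP=> /andP[qp qj].
      have /forallP/(_ j)/implyP := Hg p; rewrite !ffunE; apply.
      by rewrite !ffunE in qj; rewrite inE /=; apply/existsP; exists q; rewrite qp qj.
  + apply/forallP=> i; apply/forallP=> j; apply/implyP=> ij.
    apply/forallP=> p; rewrite !ffunE.
    by have /forallP/(_ i)/forallP/(_ j)/implyP := Hm p; apply.
Qed.

Lemma nchains_S k m :
  nchains m.+1 k = \sum_(a : col k | no2 a && ok1 set0 a) GG m (set0 :|: zeros a).
Proof.
rewrite -card_cons /nchains -sum1_card (reindex (@trb k m.+1)) /=; last exact/onW_bij/trb_bij.
rewrite -sum1_card; apply: eq_bigl => t; rewrite !inE; exact: chain_good.
Qed.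

Definition dmax k (D : pred 'I_k) := (\max_(i | D i) i.+1)%N.
Lemma dmax_le k (D : pred 'I_k) : (dmax D <= k)%N.
Proof. by apply/bigmax_leqP => i _; exact: ltn_ord. Qed.
Lemma dmaxP k (D : pred 'I_k) :
  (forall i j : 'I_k, (j <= i)%N -> D i -> D j) -> forall j, D j = (j < dmax D)%N.
Proof.
move=> Hd j; apply/idP/idP => [Dj|]; first exact: (leq_bigmax_cond (F := fun i : 'I_k => i.+1)).
apply: contraLR => nDj; rewrite -leqNgt; apply/bigmax_leqP => i Di.
rewrite ltnNge; apply/negP => ji; by rewrite (Hd i j ji Di) in nDj.
Qed.
Lemma dmax_pre k x : (x <= k)%N -> dmax (fun i : 'I_k => (i < x)%N) = x.
Proof.
move=> xk; apply/eqP; rewrite eqn_leq; apply/andP; split.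
  by apply/bigmax_leqP => i.
case: x xk => // x xk.
exact: (@leq_bigmax_cond _ _ (fun i : 'I_k => i.+1) (Ordinal xk)).
Qed.
Lemma dmax_sub k (D E : pred 'I_k) : (forall i, D i -> E i) -> (dmax D <= dmax E)%N.
Proof.
move=> H; apply/bigmax_leqP => i Di.
exact: (leq_bigmax_cond (F := fun i : 'I_k => i.+1)) (H _ Di).
Qed.

Definition col_of k (x y : nat) : col k :=
  [ffun j : 'I_k => if (j < x)%N then inord 0 else if (j < y)%N then inord 1 else inord 2].
Lemma val_col_of k x y (j : 'I_k) :
  val (col_of k x y j) = if (j < x)%N then 0%N else if (j < y)%N then 1%N else 2%N.
Proof. by rewrite ffunE; case: ifP => _; [|case: ifP => _]; rewrite /= inordK. Qed.

Definition nz k (a : col k) := dmax (fun j => val (a j) == 0%N).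
Definition n01 k (a : col k) := dmax (fun j => val (a j) <= 1)%N.

Lemma mono_col k (a : col k) : mono a -> a = col_of k (nz a) (n01 a).
Proof.
move=> /forallP Hm.
have H0 : forall i j : 'I_k, (j <= i)%N -> (val (a i) == 0%N) -> (val (a j) == 0%N).
  move=> i j ji /eqP ai; have /forallP/(_ i)/implyP/(_ ji) := Hm j.
  by rewrite ai leqn0.
have H1 : forall i j : 'I_k, (j <= i)%N -> (val (a i) <= 1)%N -> (val (a j) <= 1)%N.
  move=> i j ji ai; have /forallP/(_ i)/implyP/(_ ji) := Hm j.
  move=> h; exact: leq_trans h ai.
apply/ffunP => j; apply: val_inj; rewrite val_col_of /nz /n01 -(dmaxP H0) -(dmaxP H1).
by case: (a j) => [[|[|[|v]]] ?].
Qed.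

Lemma col_of_mono k x y : mono (col_of k x y).
Proof.
apply/forallP => j; apply/forallP => i; apply/implyP => ji; rewrite !val_col_of.
case: (ltnP j x); case: (ltnP j y); case: (ltnP i x); case: (ltnP i y); lia.
Qed.

Lemma nz_col k x y : (x <= k)%N -> nz (col_of k x y) = x.
Proof.
move=> xk; rewrite /nz -{2}(dmax_pre xk); apply: eq_bigl => j.
rewrite val_col_of; case: (ltnP j x) => //; case: ifP => //.
Qed.
Lemma n01_col k x y : (x <= y)%N -> (y <= k)%N -> n01 (col_of k x y) = y.
Proof.
move=> xy yk; rewrite /n01 -{2}(dmax_pre yk); apply: eq_bigl => j.
rewrite val_col_of; case: (ltnP j x) => jx; case: (ltnP j y) => jy //; lia.
Qed.
Lemma nz_n01 k (a : col k) : (nz a <= n01 a)%N.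
Proof. by apply: dmax_sub => i /eqP ->. Qed.

Lemma sum_mono k (R : col k -> bool) (F : col k -> nat) :
  (\sum_(a | mono a && R a) F a =
   \sum_(x < k.+1) \sum_(y < k.+1 | (x <= y)%N && R (col_of k x y)) F (col_of k x y))%N.
Proof.
pose h := fun p : 'I_k.+1 * 'I_k.+1 => col_of k p.1 p.2.
pose h' := fun a : col k => ((inord (nz a) : 'I_k.+1), (inord (n01 a) : 'I_k.+1)).
rewrite (reindex_onto h h'); last first.
  move=> a /andP[ma _]; rewrite /h /h' /= !inordK ?ltnS ?dmax_le //.
  by rewrite -mono_col.
rewrite pair_big_dep /=; apply: eq_bigl => -[x y] /=.
rewrite /h col_of_mono /=.
have xk : (x <= k)%N by rewrite -ltnS.
have yk : (y <= k)%N by rewrite -ltnS.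
case: (leqP x y) => xy /=.
  rewrite /h' nz_col // n01_col // !inord_val eqxx andbT //.
rewrite andbC; apply/negbTE/negP => /andP[/eqP [E1 E2] _].
have := nz_n01 (col_of k x y).
have: nz (col_of k x y) = x by move: (congr1 val E1) => /=; rewrite inordK // ltnS dmax_le.
have: n01 (col_of k x y) = y by move: (congr1 val E2) => /=; rewrite inordK // ltnS dmax_le.
move=> -> ->; lia.
Qed.

Definition pre k (M : nat) : {set 'I_k} := [set j : 'I_k | (j < M)%N].

Lemma zeros_pre k (a : col k) : mono a -> zeros a = pre k (nz a).
Proof.
move=> ma; rewrite {1}(mono_col ma); apply/setP => j; rewrite !inE val_col_of.
by case: ifP => //; case: ifP.
Qed.

Lemma zeros_col k x y : (x <= k)%N -> zeros (col_of k x y) = pre k x.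
Proof. by move=> xk; rewrite zeros_pre ?col_of_mono // nz_col. Qed.

Lemma preU k M x : pre k M :|: pre k x = pre k (maxn M x).
Proof. apply/setP => j; rewrite !inE; lia. Qed.

Lemma ok_col k M x y : (x <= y)%N -> (y <= k)%N ->
  [forall j : 'I_k, (j \in pre k M) ==> (val (col_of k x y j) != 1%N)] = (M <= x)%N || (x == y).
Proof.
move=> xy yk; apply/forallP/idP.
  move=> H; apply/negPn/negP; rewrite negb_or -ltnNge => /andP[xM xny].
  have xk : (x < k)%N by lia.
  have /implyP := H (Ordinal xk); rewrite inE /= xM val_col_of ltnn.
  have -> : (x < y)%N by lia.
  by move/(_ isT).
move=> H j; apply/implyP; rewrite inE val_col_of => jM.
case: (ltnP j x) => // jx; case: (ltnP j y) => // jy; lia.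
Qed.

Lemma no2_col k x y : (x <= y)%N -> (y <= k)%N -> no2 (col_of k x y) = (y == k).
Proof.
move=> xy yk; apply/forallP/idP.
  move=> H; apply/negPn/negP => yn.
  have yk' : (y < k)%N by lia.
  have := H (Ordinal yk'); rewrite val_col_of /= ltnn.
  have -> : (y < x)%N = false by lia.
  by [].
move=> /eqP yE j; rewrite val_col_of; case: ifP => //; rewrite yE ltn_ord //.
Qed.

Lemma GG0 k Z : @GG k 0 Z = 1%N.
Proof.
rewrite /GG (eq_card (B := predT)) ?card_ffun ?card_ord ?expn0 //.
move=> t; rewrite !inE; apply/andP; split; apply/forallP => -[] //.
Qed.

Lemma sum_geq_const K x c : (\sum_(i < K | (x <= i)%N) c = (K - x) * c)%N.
Proof.
have := @big_geq_mkord nat 0 addn x K xpredT (fun _ => c).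
rewrite /= sum_nat_const_nat => ->. by [].
Qed.

Definition g k m M := @GG k m (pre k M).

Lemma innerA k m M (x : 'I_k.+1) : (M <= x)%N ->
  (\sum_(y < k.+1 | (x <= y)%N && [forall j, (j \in pre k M) ==> (val (col_of k x y j) != 1%N)])
     @GG k m (pre k M :|: zeros (col_of k x y)))%N
  = ((k.+1 - x) * g k m x)%N.
Proof.
move=> Mx; have xk : (x <= k)%N by rewrite -ltnS.
rewrite (eq_bigr (fun _ => @GG k m (pre k x))); last first.
  move=> y /andP[xy _]; rewrite zeros_col // preU //; congr GG; congr pre; lia.
rewrite (eq_bigl (fun y : 'I_k.+1 => (x <= y)%N)); last first.
  move=> y; case: (leqP x y) => //= xy; rewrite ok_col ?Mx //; by rewrite -ltnS.
by rewrite sum_geq_const.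
Qed.
Lemma innerB k m M (x : 'I_k.+1) : (x < M)%N ->
  (\sum_(y < k.+1 | (x <= y)%N && [forall j, (j \in pre k M) ==> (val (col_of k x y j) != 1%N)])
     @GG k m (pre k M :|: zeros (col_of k x y)))%N
  = g k m M.
Proof.
move=> Mx; have xk : (x <= k)%N by rewrite -ltnS.
rewrite (eq_bigr (fun _ => @GG k m (pre k M))); last first.
  move=> y /andP[xy _]; rewrite zeros_col // preU //; congr GG; congr pre; lia.
rewrite (eq_bigl (fun y : 'I_k.+1 => y == x)); last first.
  move=> y; apply/idP/idP.
    case/andP=> xy; have yk : (y <= k)%N by rewrite -ltnS.
    rewrite ok_col // leqNgt Mx /= => /eqP xy'.
    by apply/eqP; apply: val_inj; rewrite /= xy'.
  move=> /eqP ->; rewrite leqnn ok_col // eqxx orbT //.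
by rewrite big_pred1_eq.
Qed.

Lemma g_S k m M :
  g k m.+1 M = (\sum_(x < k.+1) (if (M <= x)%N then (k.+1 - x) * g k m x else g k m M))%N.
Proof.
rewrite /g /GG.
have -> : #|[pred t : {ffun 'I_m.+1 -> col k} | good (pre k M) t]| =
  #|[pred f : {ffun 'I_m.+1 -> col k} | xpredT (f ord0) && good (pre k M) f]|.
  by apply: eq_card => t.
rewrite (card_cons m xpredT (pre k M)).
rewrite (eq_bigl (fun a => mono a && [forall j, (j \in pre k M) ==> (val (a j) != 1%N)])) //.
rewrite sum_mono; apply: eq_bigr => x _.
case: (leqP M x) => Mx; first exact: innerA.
exact: innerB.
Qed.
Lemma predC k (x y : 'I_k.+1) :
  ((x <= y)%N && (no2 (col_of k x y) && [forall j, (j \in set0) ==> (val (col_of k x y j) != 1%N)]))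
  = (y == ord_max).
Proof.
have xk : (x <= k)%N by rewrite -ltnS.
have yk : (y <= k)%N by rewrite -ltnS.
have -> : [forall j, (j \in set0) ==> (val (col_of k x y j) != 1%N)] = true.
  by apply/forallP => j; rewrite inE.
rewrite andbT.
case: (leqP x y) => xy /=.
  rewrite no2_col //; apply/eqP/eqP => [E|->//]; exact: val_inj.
apply/esym/negbTE/eqP => E; move: xy; rewrite E /=; lia.
Qed.
Lemma innerC k m (x : 'I_k.+1) :
  (\sum_(y < k.+1 | (x <= y)%N && (no2 (col_of k x y) && [forall j, (j \in set0) ==> (val (col_of k x y j) != 1%N)]))
     @GG k m (set0 :|: zeros (col_of k x y)))%N
  = g k m x.
Proof.
have xk : (x <= k)%N by rewrite -ltnS.
rewrite (eq_bigr (fun _ => @GG k m (pre k x))); last first.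
  by move=> y /andP[xy _]; rewrite zeros_col // set0U.
rewrite (eq_bigl _ _ (predC x)).
by rewrite big_pred1_eq.
Qed.

Lemma nchains_g k m : nchains m.+1 k = (\sum_(x < k.+1) g k m x)%N.
Proof.
rewrite nchains_S.
rewrite (eq_bigl (fun a => mono a && (no2 a && [forall j, (j \in set0) ==> (val (a j) != 1%N)]))); last first.
  by move=> a; rewrite /ok1; case: (mono a); case: (no2 a).
rewrite sum_mono; apply: eq_bigr => x _.
exact: innerC.
Qed.

Definition zcond n k i (c : {ffun 'I_k -> word n}) :=
  [forall j : 'I_k, has0 (c j) == (j < k - i)%N].

Lemma zcond_eq n k (c : {ffun 'I_k -> word n}) (i : 'I_k.+1) : is_chain c ->
  zcond i c = (nat_of_ord i == k - dmax (fun j => has0 (c j)))%N.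
Proof.
case/andP=> _ /forallP Hl.
have Hd : forall a b : 'I_k, (b <= a)%N -> has0 (c a) -> has0 (c b).
  move=> a b ba /existsP[p /eqP cp]; apply/existsP; exists p.
  have /forallP/(_ p) := implyP (forallP (Hl b) a) ba.
  by rewrite cp leqn0.
have sk := dmax_le (fun j => has0 (c j)).
have ik : (i <= k)%N by rewrite -ltnS.
apply/forallP/eqP.
  move=> H; have E : dmax (fun j => has0 (c j)) = (k - i)%N.
    rewrite -(@dmax_pre k (k - i)) ?leq_subr //.
    apply: eq_bigl => j; by have /eqP := H j.
  rewrite E; lia.
move=> ->; move=> j; rewrite (dmaxP Hd j).
have -> : (k - (k - dmax (fun j => has0 (c j))))%N = dmax (fun j => has0 (c j)) by lia.
by [].
Qed.

Lemma sum_zcond n k (c : {ffun 'I_k -> word n}) : is_chain c ->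
  (\sum_(i < k.+1) (zcond i c : nat))%N = 1%N.
Proof.
move=> Hc.
have i0k : (k - dmax (fun j => has0 (c j)) < k.+1)%N by rewrite ltnS leq_subr.
rewrite (eq_bigr (fun i => if i == Ordinal i0k then 1%N else 0%N)); last first.
  by move=> i _; rewrite zcond_eq //; case: eqP.
by rewrite -big_mkcond big_pred1_eq.
Qed.

Lemma nchains_zeta n k : nchains n k = (\sum_(i < k.+1) zeta n k i)%N.
Proof.
rewrite /nchains -sum1_card.
rewrite (eq_bigr (fun c => \sum_(i < k.+1) (zcond i c : nat))%N); last first.
  by move=> c; rewrite inE => Hc; rewrite sum_zcond.
rewrite exchange_big; apply: eq_bigr => i _.
rewrite /zeta -sum1_card big_mkcond [RHS]big_mkcond; apply: eq_bigr => c _.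
rewrite !inE; case: (is_chain c) => //=.
Qed.

Lemma sum_lt_const K M c : (\sum_(x < K) (if (x < M)%N then c else 0) = minn K M * c)%N.
Proof.
elim: K => [|K IH]; first by rewrite big_ord0 min0n.
rewrite big_ord_recr IH /=.
have [h|h] := ltnP K M.
  by rewrite (minn_idPl h) mulSn addnC.
by rewrite (minn_idPr (leqW h)) addn0.
Qed.

Lemma sum_eq_const K (M : 'I_K) c : (\sum_(x < K) (if x == M then c else 0) = c)%N.
Proof. by rewrite -big_mkcond big_pred1_eq. Qed.

Lemma g_S' k m (M : 'I_k.+1) :
  g k m.+1 M = (k.+1 * g k m M + \sum_(x < k.+1) (if (M < x)%N then (k.+1 - x) * g k m x else 0))%N.
Proof.
rewrite g_S.
rewrite (eq_bigr (fun x : 'I_k.+1 => (if (x < M)%N then g k m M else 0) +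
   (if x == M then (k.+1 - M) * g k m M else 0) +
   (if (M < x)%N then (k.+1 - x) * g k m x else 0))%N); last first.
  move=> x _; case: (ltngtP M x) => h.
  - have -> : (x == M) = false by apply/eqP => E; move: h; rewrite E ltnn.
    by rewrite ?add0n ?addn0.
  - have -> : (x == M) = false by apply/eqP => E; move: h; rewrite E ltnn.
    by rewrite ?add0n ?addn0.
  - have -> : x = M by apply: val_inj.
    by rewrite eqxx ?add0n ?addn0 h.
rewrite !big_split /= sum_lt_const sum_eq_const -mulnDl.
have -> : (minn k.+1 M + (k.+1 - M) = k.+1)%N by have := ltn_ord M; lia.
by [].
Qed.

Local Open Scope ring_scope.

Definition Nm k : 'M[rat]_(k.+1) := \matrix_(i, j) (if (i < j)%N then (k.+1 - j)%:R else 0).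
Definition Tm k : 'M[rat]_(k.+1) := (k.+1)%:R%:M + Nm k.

Lemma g_mat k m (M : 'I_k.+1) : (g k m M)%:R = \sum_l (Tm k ^+ m) M l.
Proof.
elim: m M => [|m IH] M.
  rewrite /g GG0 expr0 (bigD1 M) //= big1 => [|l lM]; rewrite !mxE ?eqxx ?addr0 //.
  by rewrite eq_sym (negbTE lM).
rewrite g_S' natrD natrM natr_sum exprS.
under [RHS]eq_bigr do rewrite -mulmxE mxE.
rewrite exchange_big /=.
under [RHS]eq_bigr do rewrite -mulr_sumr -IH.
under [RHS]eq_bigr do rewrite /Tm !mxE mulrDl.
rewrite big_split /=; congr (_ + _).
  rewrite (bigD1 M) //= eqxx mulr1n big1 ?addr0 // => x xM.
  by rewrite eq_sym (negbTE xM) mulr0n mul0r.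
apply: eq_bigr => x _; case: ifP => _; by rewrite ?natrM ?mul0r.
Qed.


Lemma smx_exp k (a : rat) p : ((a%:M : 'M[rat]_(k.+1)) ^+ p) = (a ^+ p)%:M.
Proof.
elim: p => [|p IH]; first by rewrite !expr0.
by rewrite !exprS IH -mulmxE -scalar_mxM.
Qed.

Definition msum k (A : 'M[rat]_(k.+1)) := \sum_x \sum_l A x l.
Definition dd k j := msum (Nm k ^+ j).

Lemma Tm_exp k m : Tm k ^+ m =
  \sum_(j < m.+1) ((k.+1%:R) ^+ (m - j) * 'C(m, j)%:R) *: Nm k ^+ j.
Proof.
rewrite /Tm exprDn_comm; last by rewrite /GRing.comm -!mulmxE scalar_mxC.
apply: eq_bigr => j _.
by rewrite smx_exp -mulmxE mul_scalar_mx -scaler_nat scalerA mulrC.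
Qed.

Lemma msum_lin k (I : finType) (c : I -> rat) (A : I -> 'M[rat]_(k.+1)) :
  msum (\sum_i c i *: A i) = \sum_i c i * msum (A i).
Proof.
rewrite /msum; symmetry.
under eq_bigr do rewrite mulr_sumr.
under eq_bigr do under eq_bigr do rewrite mulr_sumr.
rewrite exchange_big; apply: eq_bigr => x _.
rewrite exchange_big; apply: eq_bigr => l _.
rewrite summxE; apply: eq_bigr => i _; by rewrite mxE.
Qed.

Lemma nchains_dd k m : (nchains m.+1 k)%:R =
  \sum_(j < m.+1) ((k.+1%:R) ^+ (m - j) * 'C(m, j)%:R) * dd k j.
Proof.
rewrite nchains_g natr_sum.
under eq_bigr do rewrite g_mat.
by rewrite -[LHS]/(msum (Tm k ^+ m)) Tm_exp msum_lin.
Qed.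

Lemma Nm_low k j (i l : 'I_k.+1) : (l < i + j)%N -> (Nm k ^+ j) i l = 0.
Proof.
elim: j i l => [|j IH] i l h.
  rewrite expr0 mxE; have -> : (i == l) = false by apply/eqP => E; move: h; rewrite E addn0 ltnn.
  by [].
rewrite exprSr -mulmxE mxE big1 // => p _.
case: (ltnP p (i + j)) => hp; first by rewrite IH ?mul0r.
rewrite mxE; have -> : (p < l)%N = false by lia.
by rewrite mulr0.
Qed.

Lemma Nm_diag k j (i l : 'I_k.+1) : (i + j)%N = l ->
  (Nm k ^+ j) i l = (\prod_(t < j) (k - (i + t)))%:R.
Proof.
elim: j i l => [|j IH] i l h.
  rewrite expr0 mxE big_ord0; have -> : i = l by apply: val_inj; rewrite /= -h addn0.
  by rewrite eqxx.
have p0 : (i + j < k.+1)%N by have := ltn_ord l; lia.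
rewrite exprSr -mulmxE mxE (bigD1 (Ordinal p0)) //= big1 ?addr0.
  rewrite (IH i (Ordinal p0)) //= mxE.
  have -> : (i + j < l)%N by lia.
  rewrite big_ord_recr natrM /=; congr (_ * _%:R); lia.
move=> p hp; case: (ltngtP p (i + j)) => c.
- by rewrite Nm_low ?mul0r.
- rewrite mxE; have -> : (p < l)%N = false by lia.
  by rewrite mulr0.
- have E : p = Ordinal p0 by apply: val_inj.
  by rewrite E eqxx in hp.
Qed.

Lemma dd_high k j : (k < j)%N -> dd k j = 0.
Proof.
move=> kj; rewrite /dd /msum big1 // => x _; rewrite big1 // => l _.
by apply: Nm_low; have := ltn_ord l; lia.
Qed.

Lemma prod_fact j : (\prod_(t < j) (j - t) = j`!)%N.
Proof.
elim: j => [|j IH]; first by rewrite big_ord0.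
rewrite big_ord_recl subn0 factS; congr (_ * _)%N.
by rewrite -IH; apply: eq_bigr => t _.
Qed.

Lemma dd_k k : dd k k = (k`!)%:R.
Proof.
rewrite /dd /msum (bigD1 ord0) //= [X in _ + X]big1 ?addr0 => [|x x0].
  rewrite (bigD1 ord_max) //= big1 ?addr0 => [|l lm].
    rewrite (Nm_diag (i := ord0)) //= -prod_fact.
    by congr (_%:R); apply: eq_bigr => t _; rewrite add0n.
  apply: Nm_low => /=; have := ltn_ord l.
  have : (l != k :> nat) by apply: contraNneq lm => E; apply/eqP; apply: val_inj.
  lia.
rewrite big1 // => l _; apply: Nm_low.
have : (x != 0 :> nat) by apply: contraNneq x0 => E; apply/eqP; apply: val_inj.
have := ltn_ord l; lia.
Qed.

Definition Qp j : {poly rat} := \prod_(0 <= t < j) ('X - (t.+1)%:R%:P).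
Definition aa k j : rat := (k.+1%:R) ^+ (k - j) * dd k j / (j`!)%:R.
Definition Pk k : {poly rat} := \sum_(j < k.+1) aa k j *: Qp j.

Lemma prod_ffact m j : \prod_(0 <= t < j) (m%:R - t%:R : rat) = (m ^_ j)%:R.
Proof.
elim: j => [|j IH]; first by rewrite big_geq.
rewrite big_nat_recr //= IH ffactnSr natrM.
case: (leqP j m) => h; first by rewrite natrB.
by rewrite ffact_small ?mul0r.
Qed.

Lemma Qp_eval m j : (Qp j).[(m.+1)%:R] = ('C(m, j) * j`!)%:R.
Proof.
rewrite /Qp horner_prod bin_ffact -prod_ffact; apply: eq_bigr => t _.
by rewrite hornerXsubC !mulrS opprD addrACA subrr add0r.
Qed.

Lemma Pk_eval k m : (Pk k).[(m.+1)%:R] =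
  \sum_(j < k.+1) (k.+1%:R) ^+ (k - j) * dd k j * 'C(m, j)%:R.
Proof.
rewrite /Pk horner_sum; apply: eq_bigr => j _.
rewrite hornerZ Qp_eval /aa natrM.
have : (j`!)%:R != 0 :> rat by rewrite pnatr_eq0 -lt0n fact_gt0.
move=> h; field.
exact: h.
Qed.

Lemma size_Qp j : size (Qp j) = j.+1.
Proof. by rewrite /Qp size_prod_XsubC size_iota subn0. Qed.

Lemma size_partial k j : (size (\sum_(i < j) aa k i *: Qp i)%R <= j)%N.
Proof.
elim: j => [|j IH]; first by rewrite big_ord0 size_poly0.
rewrite big_ord_recr /=; apply: leq_trans (size_polyD _ _) _.
rewrite geq_max (leq_trans IH) //=.
by rewrite (leq_trans (size_scale_leq _ _)) // size_Qp.
Qed.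

Lemma aa_k k : aa k k = 1.
Proof.
rewrite /aa subnn expr0 mul1r dd_k divff //.
by rewrite pnatr_eq0 -lt0n fact_gt0.
Qed.

Lemma Pk_monic k : Pk k \is monic /\ size (Pk k) = k.+1.
Proof.
rewrite /Pk big_ord_recr /= aa_k scale1r.
have hs : (size (\sum_(i < k) aa k i *: Qp i)%R < size (Qp k))%N.
  by rewrite size_Qp ltnS size_partial.
split.
  by rewrite monicE lead_coefDr // -monicE /Qp monic_prod_XsubC.
by rewrite addrC size_polyDl // size_Qp.
Qed.

Lemma sum_ext (F : nat -> rat) a b : (a <= b)%N -> (forall j, (a <= j)%N -> F j = 0) ->
  \sum_(j < a) F j = \sum_(j < b) F j.
Proof.
move=> ab Hz; rewrite (big_ord_widen _ F ab) big_mkcond; apply: eq_bigr => j _.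
by case: ifP => // /negbT; rewrite -leqNgt => h; rewrite Hz.
Qed.

Lemma exp_split k m j : (j <= m)%N -> (j <= k)%N ->
  (k.+1%:R : rat) ^ (m.+1%:Z - k.+1%:Z) * k.+1%:R ^+ (k - j) = k.+1%:R ^+ (m - j).
Proof.
move=> jm jk; rewrite !exprnP -expfzDr ?pnatr_eq0 //; congr (_ ^ _); lia.
Qed.

Unset Implicit Arguments.
Theorem proposition3p7 (k : nat) (hk : (1 <= k)%N) :
  exists P : {poly rat},
    P \is monic /\ size P = k.+1 /\
    forall n : nat, (2 <= n)%N ->
      nchains n k = (\sum_(i < k.+1) zeta n k i)%N /\
      ((\sum_(i < k.+1) zeta n k i)%:R : rat)
        = (k.+1%:R : rat) ^ (n%:Z - k.+1%:Z)%R * P.[n%:R].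
Proof.
exists (Pk k); case: (Pk_monic k) => Hm Hs; split=> //; split=> // n hn.
split; first exact: nchains_zeta.
rewrite -nchains_zeta.
case: n hn => // m _.
rewrite nchains_dd Pk_eval mulr_sumr.
rewrite (@sum_ext (fun j => (k.+1%:R)^+(m-j) * 'C(m,j)%:R * dd k j) m.+1 (m + k.+1)%N); last 2 first.
- lia.
- by move=> j hj; rewrite bin_small ?mulr0 ?mul0r.
rewrite [RHS](@sum_ext (fun j => (k.+1%:R : rat) ^ (m.+1%:Z - k.+1%:Z) * ((k.+1%:R)^+(k-j) * dd k j * 'C(m,j)%:R)) k.+1 (m + k.+1)%N); last 2 first.
- lia.
- by move=> j hj; rewrite dd_high // mulr0 mul0r mulr0.
apply: eq_bigr => j _.
case: (ltnP m j) => hmj; first by rewrite bin_small // !(mulr0, mul0r).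
case: (ltnP k j) => hkj; first by rewrite dd_high // !(mulr0, mul0r).
by rewrite !mulrA exp_split // mulrAC.
Qed.
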